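(* Let $A\in\mathbb{R}^{m\times n}$, $b\in\mathbb{R}^m$, $1\le k\le n$, and let $p$ be an LPM polynomial of degree $k$ on $n\times n$ symmetric matrices with nonnegative coefficients such that $p(A^{\intercal}A)\neq 0$. Consider the sparse QCQP with $A_1=A^{\intercal}A$ and $A_0=A^{\intercal}bb^{\intercal}A$ (i.e. maximize $x^{\intercal}A^{\intercal}bb^{\intercal}Ax$ subject to $x^{\intercal}A^{\intercal}Ax=1$, $|\mathrm{supp}(x)|\le k$). Then the largest real root $\eta_p$ of the univariate polynomial $t\mapsto p(A^{\intercal}A\,t-A^{\intercal}bb^{\intercal}A)$ equals $$\eta_p=\frac{p(A^{\intercal}(I+bb^{\intercal})A)}{p(A^{\intercal}A)}-1.$$
   Context: An LPM polynomial of degree $k$ is a polynomial in a symmetric $n\times n$ matrix $X$, not identically zero, of the form $p(X)=\sum_{S\subseteq[n],|S|=k}a_S\det(X|_S)$, where $X|_S$ is the principal submatrix indexed by $S$. $\mathrm{supp}(x)=\{i:x_i\ne0\}$. *)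

(* Defs.v *)
From HB Require Import structures.
From mathcomp Require Import all_boot all_order all_algebra.
From mathcomp Require Import all_classical all_reals.
Set Implicit Arguments. Unset Strict Implicit. Unset Printing Implicit Defensive.
Import Order.TTheory GRing.Theory Num.Theory.
Local Open Scope ring_scope.

Definition psubmx (R : Type) (n : nat) (X : 'M[R]_n) (S : {set 'I_n})
  : 'M[R]_#|S| :=
  \matrix_(i < #|S|, j < #|S|) X (enum_val i) (enum_val j).

Definition lpm (R : comRingType) (n k : nat) (a : {set 'I_n} -> R)
  (X : 'M[R]_n) : R :=
  \sum_(S : {set 'I_n} | #|S| == k) a S * \det (psubmx X S).

(* the univariate polynomial t |-> p(A1 t - A0), as an element of {poly R} *)
Definition lpm_pencil (R : comRingType) (n k : nat) (a : {set 'I_n} -> R)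
  (A1 A0 : 'M[R]_n) : {poly R} :=
  lpm k (fun S => (a S)%:P)
      (\matrix_(i, j) ((A1 i j)%:P * 'X - (A0 i j)%:P)).

Definition is_largest_root (R : realType) (q : {poly R}) (eta : R) : Prop :=
  root q eta /\ (forall t : R, root q t -> t <= eta).

(* Main.v *)
Require Import Defs.
From HB Require Import structures.
From mathcomp Require Import all_boot all_order all_algebra.
From mathcomp Require Import all_classical all_reals.
From mathcomp Require Import polyrcf ring.
Import Order.TTheory GRing.Theory Num.Theory.
Local Open Scope ring_scope.
Section Gram.
Variable R : realType.

Lemma sqnorm_row (p : nat) (w : 'rV[R]_p) : (w *m w^T) 0 0 = \sum_i w 0 i ^+ 2.
Proof. by rewrite !mxE; apply: eq_bigr => i _; rewrite !mxE expr2. Qed.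

Lemma sqnorm_ge0 (p : nat) (w : 'rV[R]_p) : 0 <= (w *m w^T) 0 0.
Proof. by rewrite sqnorm_row; apply: sumr_ge0 => i _; apply: sqr_ge0. Qed.

Lemma sqnorm_eq0 (p : nat) (w : 'rV[R]_p) : (w *m w^T) 0 0 = 0 -> w = 0.
Proof.
rewrite sqnorm_row => H; apply/rowP => i; rewrite mxE.
have := @psumr_eq0P _ _ _ _ (fun i _ => sqr_ge0 (w 0 i)) H i isT.
by move/eqP; rewrite sqrf_eq0 => /eqP.
Qed.

Lemma pd_det (p k : nat) (B : 'M[R]_(p, k)) (x : R) : 0 < x ->
  \det (x%:M + B^T *m B) != 0.
Proof.
move=> x0; apply/negP => /det0P [v vnz vE].
have : (v *m (x%:M + B^T *m B) *m v^T) 0 0 = 0 by rewrite vE mul0mx mxE.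
rewrite mulmxDr mulmxDl mul_mx_scalar -scalemxAl.
have -> : v *m (B^T *m B) *m v^T = (v *m B^T) *m (v *m B^T)^T.
  by rewrite trmx_mul trmxK !mulmxA.
rewrite [in X in X = _ -> _]mxE.
have -> : (x *: (v *m v^T)) 0 0 = x * (v *m v^T) 0 0 by rewrite mxE.
move=> H.
have h1 := sqnorm_ge0 _ v; have h2 := sqnorm_ge0 _ (v *m B^T).
have : (v *m v^T) 0 0 = 0.
  apply/eqP; rewrite eq_le h1 andbT.
  have : x * (v *m v^T) 0 0 <= 0.
    by rewrite -H lerDl.
  by rewrite pmulr_rle0.
by move/(@sqnorm_eq0 _ v); apply/eqP.
Qed.

Lemma eval_char (k : nat) (G : 'M[R]_k) (x : R) :
  (char_poly (- G)).[x] = \det (x%:M + G).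
Proof.
rewrite /char_poly -[_.[x]]/(horner_eval x _) -det_map_mx; congr (\det _).
apply/matrixP => i j; rewrite !mxE /= /horner_eval.
case: (i == j) => /=; rewrite ?mulr1n ?mulr0n ?hornerE ?opprK // ?sub0r ?opprK.
Qed.

Lemma gram_det_ge0 (p k : nat) (B : 'M[R]_(p, k)) : 0 <= \det (B^T *m B).
Proof.
rewrite leNgt; apply/negP => neg.
pose f := char_poly (- (B^T *m B)).
have lc : 0 < lead_coef f by rewrite (eqP (char_poly_monic _)) ltr01.
have [z Hz] := poly_pinfty_gt_lc lc.
pose x1 := Num.max z 1.
have x1pos : 0 < x1 by rewrite lt_max ltr01 orbT.
have fx1 : 0 < f.[x1].
  apply: lt_le_trans lc _; apply: Hz; by rewrite le_max lexx.
have f0 : f.[0] < 0 by rewrite /f eval_char raddf0 add0r.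
have hprod : f.[0] * f.[x1] <= 0 by rewrite nmulr_rle0 // ltW.
have [r] := polyrcf.poly_ivt (ltW x1pos) hprod.
rewrite in_itv /= => /andP [r0 r1] /rootP rr.
have rpos : 0 < r.
  rewrite lt_neqAle r0 andbT; apply/eqP => r0'.
  by move: f0; rewrite {1}r0' rr ltxx.
by move: (pd_det _ _ B _ rpos); rewrite -eval_char rr eqxx.
Qed.
End Gram.
Section Affine.
Variable R : fieldType.

Lemma det_rank1_ex (k : nat) (X : 'M[R]_k) (u v : 'cV[R]_k) :
  exists beta, forall s, \det (X + s *: (u *m v^T)) = \det X + s * beta.
Proof.
have [->|unz] := eqVneq u 0.
  by exists 0 => s; rewrite mul0mx scaler0 addr0 mulr0 addr0.
have [i0 ui0] : exists i0, u i0 0 != 0.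
  apply/existsP; move: unz; apply: contraNT; rewrite negb_exists => /forallP H.
  apply/eqP/colP => i; rewrite mxE; apply/eqP; move: (H i); by rewrite negbK.
pose w : 'cV[R]_k := \col_i (if i == i0 then 0 else u i 0 / u i0 0).
pose e : 'cV[R]_k := delta_mx i0 0.
pose E := (1%:M - w *m e^T : 'M[R]_k).
pose E' := (1%:M + w *m e^T : 'M[R]_k).
have ew : e^T *m w = 0.
  rewrite /e trmx_delta -rowE; apply/rowP => j; rewrite !mxE eqxx.
  by [].
have EE' : E *m E' = 1%:M.
  rewrite /E /E' mulmxBl mul1mx mulmxDr mulmx1 -!mulmxA (mulmxA e^T) ew.
  by rewrite mul0mx mulmx0 addr0 addrK.
have dE : \det E != 0.
  apply/negP => /eqP H; move: (congr1 determinant EE').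
  by rewrite det_mulmx H mul0r det1 => /eqP; rewrite eq_sym oner_eq0.
have Eu : E *m u = u i0 0 *: e.
  apply/colP => i; rewrite /E mulmxBl mul1mx -mulmxA.
  have -> : e^T *m u = (u i0 0)%:M.
    rewrite /e trmx_delta -rowE; apply/rowP => j; rewrite !mxE (ord1 j) eqxx.
    by rewrite mulr1n.
  rewrite mul_mx_scalar !mxE; case: eqP => [->|/eqP ne].
    by rewrite /= mulr1 mulr0 subr0.
  by rewrite /= mulr0 mulrC divfK // subrr.
pose C := \matrix_(i, j) (if i == i0 then v j 0 else (E *m X) i j).
exists (u i0 0 * \det C / \det E) => s.
apply: (mulfI dE).
rewrite -det_mulmx mulmxDr -scalemxAr mulmxA Eu -scalemxAl scalerA.
rewrite mulrDr -det_mulmx [\det E * _]mulrCA [\det E * _]mulrC divfK //.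
rewrite (@determinant_multilinear _ _ _ (E *m X) C i0 1 (s * u i0 0)).
- by rewrite mul1r mulrA.
- apply/rowP => j; rewrite !mxE mul1r eqxx big_ord1 /e !mxE !eqxx /=.
  by rewrite mul1r.
- apply/matrixP => i j; rewrite !mxE big_ord1 /e !mxE.
  have -> : (lift i0 i == i0) = false by apply/negbTE; rewrite eq_sym neq_lift.
  by rewrite /= mul0r mulr0 addr0.
- apply/matrixP => i j; rewrite !mxE big_ord1 /e !mxE.
  by rewrite eq_sym (negbTE (neq_lift i0 i)) /= mul0r mulr0 addr0.
Qed.

Lemma det_rank1 (k : nat) (X : 'M[R]_k) (u v : 'cV[R]_k) s :
  \det (X + s *: (u *m v^T)) = \det X + s * (\det (X + u *m v^T) - \det X).
Proof.
have [beta H] := det_rank1_ex _ X u v.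
have H1 := H 1; rewrite scale1r mul1r in H1.
by rewrite H H1 addrAC subrr add0r.
Qed.
End Affine.

Section Main.
Variable R : realType.

Lemma psub_lin n (X Y : 'M[R]_n) (s : R) S :
  psubmx (X + s *: Y) S = psubmx X S + s *: psubmx Y S.
Proof. by apply/matrixP => i j; rewrite !mxE. Qed.

Lemma psub_scale n (X Y : 'M[R]_n) (t : R) S : t != 0 ->
  psubmx (t *: X - Y) S = t *: (psubmx X S + (- t^-1) *: psubmx Y S).
Proof.
move=> t0; apply/matrixP => i j; rewrite !mxE mulrDr mulNr mulrN mulrA mulfV //.
by rewrite mul1r.
Qed.

Lemma psub_rank1 n (c : 'cV[R]_n) S :
  psubmx (c *m c^T) S = (\col_i c (enum_val i) 0) *m (\col_i c (enum_val i) 0)^T.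
Proof.
by apply/matrixP => i j; rewrite !mxE !big_ord1 !mxE.
Qed.

Lemma psub_gram m n (A : 'M[R]_(m, n)) S :
  psubmx (A^T *m A) S = (\matrix_(i, j) A i (enum_val j))^T *m (\matrix_(i, j) A i (enum_val j) : 'M_(m, #|S|)).
Proof.
by apply/matrixP => i j; rewrite !mxE; apply: eq_bigr => l _; rewrite !mxE.
Qed.

Lemma pencil_eval n k (a : {set 'I_n} -> R) (A1 A0 : 'M[R]_n) t :
  (lpm_pencil k a A1 A0).[t] = lpm k a (t *: A1 - A0).
Proof.
rewrite /lpm_pencil /lpm horner_sum; apply: eq_bigr => S _.
rewrite hornerM hornerC; congr (_ * _).
rewrite -[_.[t]]/(horner_eval t _) -det_map_mx; congr (\det _).
apply/matrixP => i j; rewrite !mxE /= horner_evalE. by rewrite !hornerE mulrC.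
Qed.

Lemma uniq_nat_seq (p : nat) : uniq [seq (i.+1)%:R : R | i <- iota 0 p].
Proof.
rewrite map_inj_uniq ?iota_uniq // => x y /eqP; rewrite eqr_nat eqSS.
by move/eqP.
Qed.

Lemma poly_eq_nonzero (q r : {poly R}) :
  (forall t, t != 0 -> q.[t] = r.[t]) -> q = r.
Proof.
move=> H; apply/eqP; rewrite -subr_eq0; apply/negPn/negP => nz.
have hall : all (root (q - r)) [seq (i.+1)%:R : R | i <- iota 0 (size (q - r))].
  apply/allP => x /mapP [i _ ->]; apply/rootP.
  by rewrite hornerD hornerN H ?subrr // pnatr_eq0.
have := max_poly_roots nz hall (uniq_nat_seq (size (q - r))).
by rewrite size_map size_iota ltnn.
Qed.

Lemma gram_rank1_ge0 (m p : nat) (B : 'M[R]_(m, p)) (u : 'cV[R]_p) s : 0 <= s ->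
  0 <= \det (B^T *m B + s *: (u *m u^T)).
Proof.
move=> s0.
have -> : B^T *m B + s *: (u *m u^T) =
  (col_mx B (Num.sqrt s *: u^T))^T *m col_mx B (Num.sqrt s *: u^T).
  rewrite tr_col_mx mul_row_col; congr (_ + _).
  have -> : (Num.sqrt s *: u^T)^T = Num.sqrt s *: u by apply/matrixP => i j; rewrite !mxE.
  by rewrite -scalemxAr -scalemxAl scalerA -expr2 sqr_sqrtr.
exact: gram_det_ge0.
Qed.

Lemma e_ge0 (m p : nat) (B : 'M[R]_(m, p)) (u : 'cV[R]_p) :
  0 <= \det (B^T *m B + u *m u^T) - \det (B^T *m B).
Proof.
set d := \det (B^T *m B); set e := _ - d.
rewrite leNgt; apply/negP => eneg.
have d0 : 0 <= d by exact: gram_det_ge0.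
pose s := (d + 1) / (- e).
have s0 : 0 <= s by apply: divr_ge0; [apply: addr_ge0 | rewrite oppr_ge0 ltW].
have := gram_rank1_ge0 _ _ B u _ s0.
rewrite det_rank1 -/d -/e /s invrN mulrN mulNr -mulrA mulVf ?lt_eqF // mulr1.
by rewrite opprD addrA subrr add0r oppr_ge0 ler10.
Qed.
End Main.

Theorem mainTheorem3 (R : realType) (m n k : nat)
  (A : 'M[R]_(m, n)) (b : 'cV[R]_m) (a : {set 'I_n} -> R) :
  (1 <= k <= n)%N ->
  (forall S : {set 'I_n}, 0 <= a S) ->
  (exists S : {set 'I_n}, (#|S| == k)%N && (a S != 0)) ->
  lpm k a (A^T *m A) != 0 ->
  is_largest_root
    (lpm_pencil k a (A^T *m A) (A^T *m b *m b^T *m A))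
    (lpm k a (A^T *m (1%:M + b *m b^T) *m A) / lpm k a (A^T *m A) - 1).
Proof.
move=> /andP[k1 kn] a0 _ P0.
set M := A^T *m A in P0 *.
set c := A^T *m b.
have eN : A^T *m b *m b^T *m A = c *m c^T by rewrite /c trmx_mul trmxK !mulmxA.
have eMN : A^T *m (1%:M + b *m b^T) *m A = M + 1 *: (c *m c^T).
  by rewrite scale1r -eN mulmxDr mulmx1 mulmxDl !mulmxA.
rewrite eN eMN.
pose cS (S : {set 'I_n}) := \col_i c (enum_val i) 0 : 'cV[R]_#|S|.
pose d S := \det (psubmx M S).
pose e S := \det (psubmx M S + cS S *m (cS S)^T) - d S.
pose P := lpm k a M.
pose Q := \sum_(S : {set 'I_n} | #|S| == k) a S * e S.
have hd S : 0 <= d S by rewrite /d /M psub_gram gram_det_ge0.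
have he S : 0 <= e S by rewrite /e /d /M psub_gram e_ge0.
have Pge : 0 <= P by apply: sumr_ge0 => S _; apply: mulr_ge0; rewrite // /M psub_gram gram_det_ge0.
have Ppos : 0 < P by rewrite lt_neqAle eq_sym P0 Pge.
have Qge : 0 <= Q by apply: sumr_ge0 => S _; apply: mulr_ge0.
have PQ : lpm k a (M + 1 *: (c *m c^T)) = P + Q.
  rewrite /P /Q /lpm -big_split; apply: eq_bigr => S _.
  by rewrite psub_lin psub_rank1 scale1r /= -mulrDr /e /d /cS addrCA subrr addr0.
have etaE : (P + Q) / P - 1 = Q / P.
  by rewrite mulrDl divff ?lt0r_neq0 // addrAC subrr add0r.
rewrite -/P PQ etaE.
have [j kE] : exists j, k = j.+1 by exists k.-1; rewrite prednK.
subst k.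
pose r := P *: 'X^(j.+1) - Q *: 'X^j.
have qr : lpm_pencil j.+1 a M (c *m c^T) = r.
  apply: poly_eq_nonzero => t t0.
  rewrite pencil_eval /r !hornerE /P /Q /lpm !big_distrl -sumrB.
  apply: eq_bigr => S /eqP hS.
  rewrite psub_scale // psub_rank1 detZ det_rank1 (_ : t ^+ #|S| = t ^+ j.+1); last by rewrite hS.
  rewrite -/(cS S) -/(d S) -/(e S) /= exprS.
  have h : t * t^-1 = 1 by rewrite mulfV.
  transitivity (a S * d S * (t * t ^+ j) - a S * e S * t ^+ j * (t * t^-1)).
    ring.
  by rewrite h mulr1.
split.
- rewrite qr; apply/rootP; rewrite /r !hornerE exprS mulrA [P * _]mulrC.
  by rewrite divfK ?lt0r_neq0 // subrr.
- move=> t /rootP; rewrite qr /r !hornerE exprS => h.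
  have [tle|tpos] := lerP t 0.
    by apply: le_trans tle _; apply: divr_ge0.
  have : (P * t - Q) * t ^+ j = 0 by rewrite mulrBl -mulrA.
  move/eqP; rewrite mulf_eq0 expf_eq0 (gt_eqF tpos) andbF orbF subr_eq0.
  by move=> /eqP <-; rewrite [P * t]mulrC mulfK ?lt0r_neq0.
Qed.
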